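(* Under the setting of Theorem 2, let $d_{\min}=\min_{1\le s<j\le r+1}(\lambda_s-\lambda_j)$. Then: if $(i_1,\dots,i_r)=(1,\dots,r)$, $\lambda_{\min}(\mathrm{hess}\,g(\mathbf{X}_\Omega))\ge\tfrac12 d_{\min}$; if $\{i_1,\dots,i_r\}=\{1,\dots,r\}$ but $(i_1,\dots,i_r)\ne(1,\dots,r)$, $\lambda_{\min}(\mathrm{hess}\,g(\mathbf{X}_\Omega))\le-\tfrac12 d_{\min}$; if $\{i_1,\dots,i_r\}\ne\{1,\dots,r\}$, $\lambda_{\min}(\mathrm{hess}\,g(\mathbf{X}_\Omega))\le-d_{\min}$.
   Context: $\mathbf{M}\in\mathbb{R}^{N\times N}$ symmetric with eigenvalues $\lambda_1>\cdots>\lambda_r>\lambda_{r+1}\ge\cdots\ge\lambda_N$ and orthonormal eigenvectors $\bm{x}_1,\dots,\bm{x}_N$; for distinct $i_1,\dots,i_r\in[N]$, $\mathbf{X}_\Omega=[\bm{x}_{i_1},\dots,\bm{x}_{i_r}]$. $\mathrm{St}(N,r)=\{\mathbf{X}:\mathbf{X}^\top\mathbf{X}=\mathbf{I}_r\}$, $\mathbf{N}=\mathrm{diag}(r,r-1,\dots,1)$, $g(\mathbf{X})=-\tfrac12\mathrm{tr}(\mathbf{X}^\top\mathbf{M}\mathbf{X}\mathbf{N})$. $\mathcal{T}_{\mathbf{X}}\mathrm{St}(N,r)=\{\mathbf{U}:\mathbf{X}^\top\mathbf{U}+\mathbf{U}^\top\mathbf{X}=\mathbf{0}\}$; $\mathrm{hess}\,g(\mathbf{X})[\mathbf{U},\mathbf{U}]=\langle\mathbf{X}^\top\mathbf{M}\mathbf{X},\mathbf{U}^\top\mathbf{U}\mathbf{N}\rangle-\langle\mathbf{M},\mathbf{U}\mathbf{N}\mathbf{U}^\top\rangle$,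 and $\lambda_{\min}(\mathrm{hess}\,g(\mathbf{X}))=\min\{\mathrm{hess}\,g(\mathbf{X})[\mathbf{U},\mathbf{U}]:\mathbf{U}\in\mathcal{T}_{\mathbf{X}}\mathrm{St}(N,r),\|\mathbf{U}\|_F=1\}$. *)

(* Defs.v *)
From HB Require Import structures.
From mathcomp Require Import all_boot all_order all_algebra.
From mathcomp Require Import all_classical all_reals.
Set Implicit Arguments. Unset Strict Implicit. Unset Printing Implicit Defensive.
Import Order.TTheory GRing.Theory Num.Theory.
Local Open Scope ring_scope.
Local Open Scope classical_set_scope.

Section Defs.
Variable R : realType.

Definition frob {m n : nat} (A B : 'M[R]_(m, n)) : R := \tr (A^T *m B).

Definition frob_norm {m n : nat} (A : 'M[R]_(m, n)) : R :=
  Num.sqrt (\sum_(i < m) \sum_(j < n) A i j ^+ 2).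

(* N = diag(r, r-1, ..., 1) (0-based index i carries weight r - i) *)
Definition Nw (r : nat) : 'M[R]_r := diag_mx (\row_(i < r) (r - i)%:R).

Definition g {Nd r : nat} (M : 'M[R]_Nd) (X : 'M[R]_(Nd, r)) : R :=
  - (1/2) * \tr (X^T *m M *m X *m Nw r).

(* tangent space of the Stiefel manifold at X *)
Definition tangent {Nd r : nat} (X : 'M[R]_(Nd, r)) : set 'M[R]_(Nd, r) :=
  [set U | X^T *m U + U^T *m X = 0].

Definition hess_g {Nd r : nat} (M : 'M[R]_Nd) (X U : 'M[R]_(Nd, r)) : R :=
  frob (X^T *m M *m X) (U^T *m U *m Nw r) - frob M (U *m Nw r *m U^T).

(* lambda_min(hess g(X)) = min over unit tangent U of hess g(X)[U,U],
   expressed as the infimum (the minimum is attained by compactness). *)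
Definition lambda_min_hess {Nd r : nat} (M : 'M[R]_Nd) (X : 'M[R]_(Nd, r)) : R :=
  inf [set hess_g M X U | U in [set U | tangent X U /\ frob_norm U = 1]].

Definition X_Omega {Nd r : nat} (P : 'M[R]_Nd) (idx : 'I_r -> 'I_Nd) : 'M[R]_(Nd, r) :=
  \matrix_(a < Nd, b < r) P a (idx b).

(* d_min = min_{1 <= s < j <= r+1} (lambda_s - lambda_j)  (0-based: s < j <= r) *)
Definition d_min {Nd : nat} (r : nat) (lam : 'I_Nd -> R) : R :=
  inf [set d : R | exists s j : 'I_Nd, [/\ (s < j)%N, (j <= r)%N & d = lam s - lam j]].

End Defs.

(* Main.v *)
From HB Require Import structures.
From mathcomp Require Import all_boot all_order all_algebra.
From mathcomp Require Import all_classical all_reals.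
Require Import Defs.
From mathcomp Require Import ring lra zify.
Set Implicit Arguments. Unset Strict Implicit. Unset Printing Implicit Defensive.
Import Order.TTheory GRing.Theory Num.Theory.
Local Open Scope ring_scope.
Local Open Scope classical_set_scope.

Section H.
Variable R : realType.
Variables (Nd r : nat) (M : 'M[R]_Nd) (lam : 'I_Nd -> R) (P : 'M[R]_Nd) (idx : 'I_r -> 'I_Nd).
Hypothesis HMs : M^T = M.
Hypothesis HPP : P^T *m P = 1%:M.
Hypothesis HMP : M *m P = P *m diag_mx (\row_k lam k).
Hypothesis Hinj : injective idx.

Definition E : 'M[R]_(Nd, r) := \matrix_(k < Nd, b < r) ((k == idx b)%:R : R).
Definition nw (b : 'I_r) : R := (r - b)%:R.

Lemma XE : X_Omega P idx = P *m E.
Proof.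
apply/matrixP => a b; rewrite !mxE (bigD1 (idx b)) //= !mxE eqxx mulr1 big1 ?addr0 //.
by move=> k /negbTE Hk; rewrite mxE Hk mulr0.
Qed.

Lemma XMX : (P *m E)^T *m M *m (P *m E) = diag_mx (\row_b lam (idx b)).
Proof.
rewrite trmx_mul !mulmxA -(mulmxA _ M P) HMP mulmxA -(mulmxA _ P^T P) HPP mulmx1.
rewrite mul_mx_diag; apply/matrixP => a b; rewrite !mxE (bigD1 (idx b)) //= !mxE eqxx mulr1 big1 ?addr0.
  rewrite (inj_eq Hinj) eq_sym.
  by case: eqP => [->|_]; rewrite ?mul1r ?mul0r ?mulr1n ?mulr0n.
by move=> k /negbTE Hk; rewrite !mxE Hk mulr0.
Qed.

Lemma term1 C : frob ((P *m E)^T *m M *m (P *m E)) ((P *m C)^T *m (P *m C) *m Nw R r)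
  = \sum_(b < r) lam (idx b) * (\sum_(k < Nd) C k b ^+ 2) * nw b.
Proof.
rewrite /frob XMX tr_diag_mx trmx_mul -(mulmxA C^T) (mulmxA P^T) HPP mul1mx.
rewrite mul_diag_mx /Nw mul_mx_diag /mxtrace; apply: eq_bigr => b _; rewrite !mxE.
rewrite mulrA; congr (_ * _ * _); apply: eq_bigr => k _; by rewrite !mxE expr2.
Qed.

Lemma term2 C : frob M ((P *m C) *m Nw R r *m (P *m C)^T)
  = \sum_(k < Nd) lam k * \sum_(b < r) C k b ^+ 2 * nw b.
Proof.
rewrite /frob HMs trmx_mul !mulmxA HMP mxtrace_mulC !mulmxA HPP mul1mx.
rewrite -!mulmxA mul_diag_mx /mxtrace; apply: eq_bigr => k _; rewrite !mxE.
congr (_ * _); apply: eq_bigr => b _; rewrite !mxE.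
rewrite /Nw (bigD1 b) //= !mxE eqxx mulr1n big1 ?addr0; first by rewrite /nw; ring.
by move=> j Hj; rewrite !mxE eq_sym (negbTE Hj) mulr0n mul0r.
Qed.

Lemma hessE C : hess_g M (P *m E) (P *m C) =
  \sum_(k < Nd) \sum_(b < r) nw b * (lam (idx b) - lam k) * C k b ^+ 2.
Proof.
rewrite /hess_g term1 term2.
rewrite [RHS](eq_bigr (fun k => \sum_(b < r) nw b * lam (idx b) * C k b ^+ 2
   - lam k * \sum_(b < r) C k b ^+ 2 * nw b)); last first.
  move=> k _; rewrite big_distrr -sumrB; apply: eq_bigr => b _ /=; ring.
rewrite sumrB exchange_big /=; congr (_ - _); apply: eq_bigr => b _.
rewrite big_distrr big_distrl /=; apply: eq_bigr => k _; ring.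
Qed.

Lemma sumsq m n (A : 'M[R]_(m, n)) :
  \sum_(i < m) \sum_(j < n) A i j ^+ 2 = \tr (A^T *m A).
Proof.
rewrite /mxtrace exchange_big /=; apply: eq_bigr => j _; rewrite !mxE.
by apply: eq_bigr => i _; rewrite !mxE expr2.
Qed.

Lemma normE C : frob_norm (P *m C) = Num.sqrt (\sum_(k < Nd) \sum_(b < r) C k b ^+ 2).
Proof.
by rewrite /frob_norm !sumsq trmx_mul -mulmxA (mulmxA P^T) HPP mul1mx.
Qed.

Lemma tangentE C : tangent (P *m E) (P *m C) <->
  (forall a b, C (idx a) b + C (idx b) a = 0).
Proof.
rewrite /tangent /= !trmx_mul -!mulmxA !(mulmxA P^T) HPP !mul1mx.
have H1 a b : (E^T *m C) a b = C (idx a) b.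
  rewrite !mxE (bigD1 (idx a)) //= !mxE eqxx mul1r big1 ?addr0 //.
  by move=> k Hk; rewrite !mxE (negbTE Hk) mul0r.
have H2 a b : (C^T *m E) a b = C (idx b) a.
  rewrite !mxE (bigD1 (idx b)) //= !mxE eqxx mulr1 big1 ?addr0 //.
  by move=> k Hk; rewrite !mxE (negbTE Hk) mulr0.
have e (A B : 'M[R]_r) a b : (A + B) a b = A a b + B a b by rewrite mxE.
split.
  by move=> H a b; move/matrixP: H => /(_ a b); rewrite e H1 H2 mxE.
by move=> H; apply/matrixP => a b; rewrite e H1 H2 H mxE.
Qed.

Lemma PPt : P *m P^T = 1%:M.
Proof. exact: mulmx1C. Qed.

Lemma sum_delta (F : 'I_Nd -> 'I_r -> R) k0 b0 :
  \sum_(k < Nd) \sum_(b < r) F k b * ((k == k0) && (b == b0))%:R = F k0 b0.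
Proof.
rewrite (bigD1 k0) //= [X in _ + X]big1 ?addr0; last first.
  by move=> k Hk; apply: big1 => b _; rewrite (negbTE Hk) mulr0.
rewrite (bigD1 b0) //= !eqxx mulr1 big1 ?addr0 //.
by move=> b Hb; rewrite (negbTE Hb) andbF mulr0.
Qed.

Lemma split_idx (G : 'I_Nd -> R) :
  \sum_(k < Nd) G k = \sum_(a < r) G (idx a) + \sum_(k < Nd | k \notin idx @: setT) G k.
Proof.
rewrite (bigID (mem (idx @: setT))) /=; congr (_ + _).
rewrite big_imset /=; last by move=> x y _ _; exact: Hinj.
by apply: eq_bigl => a; rewrite in_setT.
Qed.

Lemma exists_out : (r < Nd)%N -> exists k : 'I_Nd, forall b, idx b != k.
Proof.
move=> HrN; case: (pselect (exists k : 'I_Nd, forall b, idx b != k)) => // Hno.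
have Hall : forall k : 'I_Nd, exists b, idx b = k.
  move=> k; case: (pselect (exists b, idx b = k)) => // Hb.
  exfalso; apply: Hno; exists k => b; apply/eqP => Hbk; apply: Hb; by exists b.
have [g Hg] := fin_all_exists Hall.
have gi : injective g by apply: (can_inj Hg).
by move: (leq_card g gi); rewrite !card_ord; lia.
Qed.

Hypothesis Hr : (0 < r)%N.
Hypothesis HrN : (r < Nd)%N.
Hypothesis Hdec2 : forall i j : 'I_Nd, (i <= j)%N -> lam j <= lam i.

Let Dset := [set d : R | exists s j : 'I_Nd, [/\ (s < j)%N, (j <= r)%N & d = lam s - lam j]].

Lemma Dset_lb : lbound Dset 0.
Proof.
move=> x [s [j [Hsj _ ->]]]; rewrite subr_ge0; apply: Hdec2; exact: ltnW.
Qed.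

Lemma d_le (s j : 'I_Nd) : (s < j)%N -> (j <= r)%N -> d_min r lam <= lam s - lam j.
Proof.
move=> Hsj Hj; apply: (ge_inf (E := Dset)); first by exists 0; exact: Dset_lb.
by exists s, j.
Qed.

Lemma d_ge0 : 0 <= d_min r lam.
Proof.
apply: lb_le_inf; last exact: Dset_lb.
have H0 : (0 < Nd)%N by lia.
by exists (lam (Ordinal H0) - lam (Ordinal HrN)), (Ordinal H0), (Ordinal HrN).
Qed.

Definition Sset := [set hess_g M (X_Omega P idx) U | U in
   [set U | tangent (X_Omega P idx) U /\ frob_norm U = 1]].

Lemma sqrt1 (x : R) : 0 <= x -> Num.sqrt x = 1 -> x = 1.
Proof. by move=> H0 H; rewrite -(sqr_sqrtr H0) H expr1n. Qed.

Lemma sumsq_ge0 (C : 'M[R]_(Nd, r)) : 0 <= \sum_(k < Nd) \sum_(b < r) C k b ^+ 2.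
Proof. by apply: sumr_ge0 => k _; apply: sumr_ge0 => b _; exact: sqr_ge0. Qed.

Lemma nw_ge1 b : 1 <= nw b.
Proof. by rewrite /nw (_ : 1 = 1%:R) // ler_nat; have := ltn_ord b; lia. Qed.

Lemma nw_ler b : nw b <= r%:R.
Proof. by rewrite /nw ler_nat; lia. Qed.

Lemma Sset_lb : has_lbound Sset.
Proof.
have H0 : (0 < Nd)%N by lia.
have H1 : (Nd.-1 < Nd)%N by lia.
set m := lam (Ordinal H1) - lam (Ordinal H0).
exists (r%:R * m) => _ [U [HU HUn] <-].
have HUC : U = P *m (P^T *m U) by rewrite mulmxA PPt mul1mx.
move: HUn; rewrite HUC; move: (P^T *m U) => C.
rewrite normE => /(sqrt1 (sumsq_ge0 _)) Hs.
rewrite XE hessE -[X in X <= _]mulr1 -Hs mulr_sumr; apply: ler_sum => k _.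
rewrite mulr_sumr; apply: ler_sum => b _; apply: ler_wpM2r; first exact: sqr_ge0.
have Hm : m <= 0 by rewrite /m subr_le0; apply: Hdec2.
have Hx : m <= lam (idx b) - lam k.
  rewrite /m lerB //; apply: Hdec2 => /=; have := ltn_ord (idx b); have := ltn_ord k; lia.
have := nw_ge1 b; have := nw_ler b; nra.
Qed.

Definition Dl (k0 : 'I_Nd) (b0 : 'I_r) : 'M[R]_(Nd, r) :=
  \matrix_(k, b) ((k == k0) && (b == b0))%:R.

Lemma Dl_sum F k0 b0 :
  \sum_(k < Nd) \sum_(b < r) F k b * Dl k0 b0 k b ^+ 2 = F k0 b0.
Proof.
rewrite -(sum_delta F k0 b0); apply: eq_bigr => k _; apply: eq_bigr => b _.
by rewrite mxE; case: (_ && _); rewrite ?expr1n ?expr0n.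
Qed.

Lemma Dl_unit k0 b0 : (forall b, idx b != k0) ->
  tangent (X_Omega P idx) (P *m Dl k0 b0) /\ frob_norm (P *m Dl k0 b0) = 1.
Proof.
move=> Hk; rewrite XE; split.
  apply/tangentE => a b; rewrite !mxE (negbTE (Hk a)) (negbTE (Hk b)) /=; by rewrite addr0.
rewrite normE (_ : \sum_k _ = 1) ?sqrtr1 //.
by rewrite -(Dl_sum (fun _ _ => 1) k0 b0); apply: eq_bigr => k _; apply: eq_bigr => b _; rewrite mul1r.
Qed.

Lemma Sset_n0 : Sset !=set0.
Proof.
have [k0 Hk] := exists_out HrN.
by exists (hess_g M (X_Omega P idx) (P *m Dl k0 (Ordinal Hr))), (P *m Dl k0 (Ordinal Hr)); first exact: Dl_unit.
Qed.

Lemma nw_lt (a b : 'I_r) : (a < b)%N -> nw b + 1 <= nw a.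
Proof. by move=> H; rewrite /nw (_ : (1:R) = 1%:R) // -natrD ler_nat; have := ltn_ord b; lia. Qed.

Lemma pairR (na nb la lb d x : R) : 0 <= d -> 0 <= x -> nb + 1 <= na -> d <= la - lb ->
  d / 2 * x + d / 2 * x <= nb * (lb - la) * x + na * (la - lb) * x.
Proof.
move=> Hd Hx Hn Hl.
have h : d <= (na - nb) * (la - lb) by nra.
have := ler_wpM2r Hx h; lra.
Qed.

Lemma sym2 (f : 'I_r -> 'I_r -> R) :
  \sum_(a < r) \sum_(b < r) (f a b + f b a) = 2 * \sum_(a < r) \sum_(b < r) f a b.
Proof.
under eq_bigr do rewrite big_split /=.
rewrite big_split /= [X in _ + X]exchange_big /=; lra.
Qed.

Lemma case1 : (forall b, val (idx b) = val b) ->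
  (1/2) * d_min r lam <= lambda_min_hess M (X_Omega P idx).
Proof.
move=> Hid; have Hid' : forall b, nat_of_ord (idx b) = b := Hid.
apply: lb_le_inf; first exact: Sset_n0.
move=> _ [U [HU HUn] <-].
have HUC : U = P *m (P^T *m U) by rewrite mulmxA PPt mul1mx.
move: HU HUn; rewrite HUC; move: (P^T *m U) => C.
rewrite XE tangentE => Ht; rewrite normE => /(sqrt1 (sumsq_ge0 _)) Hs.
have d0 := d_ge0.
rewrite hessE (_ : 1/2 * d_min r lam = 1/2 * d_min r lam *
  \sum_(k<Nd) \sum_(b<r) C k b ^+2); last by rewrite Hs mulr1.
rewrite mulr_sumr split_idx [X in _ <= X]split_idx.
apply: lerD; last first.
  apply: ler_sum => k Hk; rewrite mulr_sumr; apply: ler_sum => b _.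
  apply: ler_wpM2r; first exact: sqr_ge0.
  have Hkr : (r <= k)%N.
    case: (ltnP k r) => // Hkr.
    move/negP: Hk => Hk; exfalso; apply: Hk.
    have -> : k = idx (Ordinal Hkr).
      by apply/val_inj => /=; rewrite Hid.
    by apply/imsetP; exists (Ordinal Hkr); rewrite ?in_setT.
  have h1 : d_min r lam <= lam (idx b) - lam (Ordinal HrN).
    by apply: d_le => //=; rewrite Hid'.
  have h2 : lam k <= lam (Ordinal HrN) by apply: Hdec2.
  have := nw_ge1 b; nra.
set T := fun a b => nw b * (lam (idx b) - lam (idx a)) * C (idx a) b ^+ 2.
set f := fun a b => 1 / 2 * d_min r lam * C (idx a) b ^+ 2.
have eL : \sum_(a < r) 1 / 2 * d_min r lam * \sum_(b < r) C (idx a) b ^+ 2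
   = \sum_(a < r) \sum_(b < r) f a b by apply: eq_bigr => a _; rewrite mulr_sumr.
rewrite eL.
suff key : \sum_(a < r) \sum_(b < r) (f a b + f b a) <= \sum_(a < r) \sum_(b < r) (T a b + T b a).
  by move: key; rewrite !sym2; lra.
apply: ler_sum => a _; apply: ler_sum => b _; rewrite /f /T.
have Hba : C (idx b) a = - C (idx a) b by apply/eqP; rewrite -addr_eq0 addrC Ht.
rewrite Hba sqrrN.
have Hx := sqr_ge0 (C (idx a) b).
case: (ltngtP a b) => Hab.
- have hd : d_min r lam <= lam (idx a) - lam (idx b).
    by apply: d_le; rewrite !Hid' //; exact: ltnW.
  have := pairR d0 Hx (nw_lt Hab) hd; lra.
- have hd : d_min r lam <= lam (idx b) - lam (idx a).
    by apply: d_le; rewrite !Hid' //; exact: ltnW.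
  have := pairR d0 Hx (nw_lt Hab) hd; lra.
- have Hab' : a = b by apply: val_inj.
  subst b; have : C (idx a) a = 0 by move: (Ht a a); lra.
  move=> ->; rewrite expr0n /=; lra.
Qed.

Lemma image_of_all : (forall b, (idx b < r)%N) ->
  forall k : 'I_Nd, (k < r)%N -> exists b, idx b = k.
Proof.
move=> Hb k Hk.
pose f := fun b => Ordinal (Hb b).
have fi : injective f by move=> x y /(congr1 val) /= /val_inj /Hinj.
have [g fg gf] := inj_card_bij fi (leqnn _).
exists (g (Ordinal Hk)); apply: val_inj => /=.
by have := congr1 val (gf (Ordinal Hk)).
Qed.

Lemma all_of_image : (forall k : 'I_Nd, (k < r)%N -> exists b, idx b = k) ->
  forall b, (idx b < r)%N.
Proof.
move=> Hk.
have Hall : forall kk : 'I_r, exists b, idx b = widen_ord (ltnW HrN) kk.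
  by move=> kk; apply: Hk => /=.
have [g Hg] := fin_all_exists Hall.
have gi : injective g.
  by move=> x y Hxy; have := Hg x; rewrite Hxy Hg => /(congr1 val) /= /val_inj.
have [h gh hg] := inj_card_bij gi (leqnn _).
by move=> b; rewrite -(hg b) Hg /=.
Qed.

Lemma Sset_le U : tangent (X_Omega P idx) U -> frob_norm U = 1 ->
  lambda_min_hess M (X_Omega P idx) <= hess_g M (X_Omega P idx) U.
Proof.
by move=> H1 H2; apply: (ge_inf Sset_lb); exists U.
Qed.

Lemma case3 : idx @` setT <> [set i : 'I_Nd | (i < r)%N] ->
  lambda_min_hess M (X_Omega P idx) <= - d_min r lam.
Proof.
move=> Hne.
have [k0 [Hk0 Hk0n]] : exists k0 : 'I_Nd, (k0 < r)%N /\ forall b, idx b != k0.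
  case: (pselect (exists k0 : 'I_Nd, (k0 < r)%N /\ forall b, idx b != k0)) => // Hno.
  exfalso; apply: Hne.
  have Hk : forall k : 'I_Nd, (k < r)%N -> exists b, idx b = k.
    move=> k Hk; case: (pselect (exists b, idx b = k)) => // Hb.
    exfalso; apply: Hno; exists k; split => // b; apply/eqP => e; apply: Hb; by exists b.
  have Hb := all_of_image Hk.
  apply/seteqP; split => x /=.
    by move=> [b _ <-]; exact: Hb.
  by move=> /Hk [b <-]; exists b.
have [b0 Hb0] : exists b0, (r <= idx b0)%N.
  case: (pselect (exists b0, (r <= idx b0)%N)) => // Hno.
  have Hb : forall b, (idx b < r)%N.
    by move=> b; case: (ltnP (idx b) r) => // H; exfalso; apply: Hno; exists b.
  have [b e] := image_of_all Hb Hk0.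
  by move: (Hk0n b); rewrite e eqxx.
have [HT HN] := Dl_unit b0 Hk0n.
apply: (le_trans (Sset_le HT HN)).
rewrite XE hessE Dl_sum.
have h1 : d_min r lam <= lam k0 - lam (Ordinal HrN) by apply: d_le.
have h2 : lam (idx b0) <= lam (Ordinal HrN) by apply: Hdec2.
have := nw_ge1 b0; have := d_ge0; nra.
Qed.

Definition tt2 : R := Num.sqrt (1/2).

Definition C2 (p1 : 'I_Nd) (q1 : 'I_r) (p2 : 'I_Nd) (q2 : 'I_r) : 'M[R]_(Nd, r) :=
  \matrix_(k, b) (tt2 * ((k == p1) && (b == q1))%:R - tt2 * ((k == p2) && (b == q2))%:R).

Lemma tt2_sq : tt2 ^+ 2 = 1/2.
Proof. by rewrite /tt2 sqr_sqrtr // divr_ge0. Qed.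

Lemma C2_sum F p1 q1 p2 q2 : q1 != q2 ->
  \sum_(k < Nd) \sum_(b < r) F k b * C2 p1 q1 p2 q2 k b ^+ 2 = (F p1 q1 + F p2 q2) / 2.
Proof.
move=> Hq.
transitivity (\sum_(k < Nd) \sum_(b < r) (tt2 ^+ 2 * F k b * ((k == p1) && (b == q1))%:R
   + tt2 ^+ 2 * F k b * ((k == p2) && (b == q2))%:R)).
  apply: eq_bigr => k _; apply: eq_bigr => b _; rewrite mxE.
  have : ~~ ((b == q1) && (b == q2)).
    by apply/negP => /andP [/eqP e1 /eqP e2]; move: Hq; rewrite -e1 -e2 eqxx.
  case: (b == q1); case: (b == q2); rewrite ?andbT ?andbF //= => _;
    case: (k == p1); case: (k == p2); rewrite /=; ring.
under eq_bigr do rewrite big_split /=.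
rewrite big_split /=.
rewrite (sum_delta (fun k b => tt2 ^+ 2 * F k b)) (sum_delta (fun k b => tt2 ^+ 2 * F k b)).
rewrite tt2_sq; lra.
Qed.

Lemma C2_tangent a bb : a != bb ->
  tangent (X_Omega P idx) (P *m C2 (idx a) bb (idx bb) a).
Proof.
move=> Hab; rewrite XE; apply/tangentE => x y; rewrite !mxE !(inj_eq Hinj).
rewrite [(y == a) && _]andbC [(y == bb) && _]andbC; ring.
Qed.

Lemma C2_norm a bb : a != bb -> frob_norm (P *m C2 (idx a) bb (idx bb) a) = 1.
Proof.
move=> Hab; rewrite normE.
rewrite (_ : \sum_k _ = \sum_(k < Nd) \sum_(b < r) 1 * C2 (idx a) bb (idx bb) a k b ^+ 2).
  by rewrite C2_sum 1?eq_sym // (_ : (1 + 1) / 2 = 1 :> R) ?sqrtr1 //; lra.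
by apply: eq_bigr => k _; apply: eq_bigr => b _; rewrite mul1r.
Qed.

Lemma case2 : idx @` setT = [set i : 'I_Nd | (i < r)%N] ->
  ~ (forall b : 'I_r, val (idx b) = val b) ->
  lambda_min_hess M (X_Omega P idx) <= - ((1/2) * d_min r lam).
Proof.
move=> Heq Hnid.
have Hb : forall b, (idx b < r)%N.
  move=> b; have : [set i : 'I_Nd | (i < r)%N] (idx b) by rewrite -Heq; exists b.
  by [].
have Hk : forall k : 'I_Nd, (k < r)%N -> exists b, idx b = k.
  move=> k Hk; have : (idx @` setT) k by rewrite Heq.
  by move=> [b _ e]; exists b.
have [a [bb [Hab Hinv]]] : exists a bb : 'I_r, (a < bb)%N /\ (idx bb < idx a)%N.
  have Hex : exists n, [exists b : 'I_r, (val b == n) && (val (idx b) != n)].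
    case: (pselect (exists b : 'I_r, val (idx b) != val b)) => [[b Hb']|Hno].
      by exists (val b); apply/existsP; exists b; rewrite eqxx Hb'.
    exfalso; apply: Hnid => b; apply/eqP/negPn/negP => H; apply: Hno; by exists b.
  case: (ex_minnP Hex) => m /existsP [b /andP [/eqP Hbm Hbi]] Hmin.
  have Hlow : forall c : 'I_r, (c < m)%N -> val (idx c) = val c.
    move=> c Hc; apply/eqP/negPn/negP => H.
    have : (m <= val c)%N by apply: Hmin; apply/existsP; exists c; rewrite eqxx H.
    by move=> H1; have := leq_ltn_trans H1 Hc; rewrite ltnn.
  have Hgt : (m < idx b)%N.
    case: (ltngtP (idx b) m) => // H.
      have j := Hlow (Ordinal (Hb b)) H.
      have e : idx (Ordinal (Hb b)) = idx b by apply: val_inj.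
      have := congr1 val (Hinj e) => /= e2.
      by move: H; rewrite /= in e2; rewrite e2 Hbm ltnn.
    by move: Hbi; rewrite -H eqxx.
  have Hmr : (m < Nd)%N by have := ltn_ord (idx b); lia.
  have [c Hc] := Hk (Ordinal Hmr) (ltac:(rewrite /= -Hbm; exact: ltn_ord)).
  have Hcm : nat_of_ord (idx c) = m by rewrite Hc.
  have Hbm' : nat_of_ord b = m := Hbm.
  exists b, c; split; last by rewrite Hcm.
  case: (ltngtP b c) => // H.
    have Hc' : (c < m)%N by rewrite -Hbm'.
    have := Hlow c Hc'; rewrite /= Hcm => e.
    by move: Hc'; rewrite -e ltnn.
  have e : b = c by apply: val_inj.
  move: Hbi; rewrite e.
  by rewrite Hc /= eqxx.
have Hne : a != bb by apply/eqP => e; rewrite e ltnn in Hab.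
apply: (le_trans (Sset_le (C2_tangent Hne) (C2_norm Hne))).
rewrite XE hessE C2_sum; last by rewrite eq_sym.
have hd : d_min r lam <= lam (idx bb) - lam (idx a) by apply: d_le => //; exact: ltnW.
have hn := nw_lt Hab.
have := d_ge0; nra.
Qed.
End H.

Unset Implicit Arguments.
Theorem mainTheorem4 (R : realType) (Nd r : nat)
  (M : 'M[R]_Nd) (lam : 'I_Nd -> R) (P : 'M[R]_Nd) (idx : 'I_r -> 'I_Nd) :
  (0 < r)%N -> (r < Nd)%N ->
  M^T = M ->
  (* orthonormal eigenvectors x_1..x_N (columns of P) with M x_k = lam_k x_k *)
  P^T *m P = 1%:M ->
  M *m P = P *m diag_mx (\row_k lam k) ->
  (* lam_1 > ... > lam_r > lam_{r+1} >= ... >= lam_N *)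
  (forall i j : 'I_Nd, (i < j)%N -> (i < r)%N -> lam j < lam i) ->
  (forall i j : 'I_Nd, (i <= j)%N -> lam j <= lam i) ->
  (* i_1, ..., i_r distinct *)
  injective idx ->
  [/\ ((forall b : 'I_r, val (idx b) = val b) ->
         lambda_min_hess M (X_Omega P idx) >= (1/2) * d_min r lam),
      (idx @` setT = [set i : 'I_Nd | (i < r)%N] ->
       ~ (forall b : 'I_r, val (idx b) = val b) ->
         lambda_min_hess M (X_Omega P idx) <= - ((1/2) * d_min r lam))
    & (idx @` setT <> [set i : 'I_Nd | (i < r)%N] ->
         lambda_min_hess M (X_Omega P idx) <= - d_min r lam)].
Proof.
move=> Hr HrN HMs HPP HMP Hdec1 Hdec2 Hinj; split.
- by move=> Hid; apply: (case1 HMs HPP HMP Hinj Hr HrN Hdec2).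
- by move=> Heq Hnid; apply: (case2 HMs HPP HMP Hinj Hr HrN Hdec2).
- by move=> Hne; apply: (case3 HMs HPP HMP Hinj Hr HrN Hdec2).
Qed.
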